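(* For every integer $n\ge 4$ there exists a family of $\left\lfloor \frac{6(n-1)}{5}\right\rfloor$ even cycles on a vertex set of size $n$ which contains no rainbow even cycle.
   Context: A (colored) graph is a finite set $\mathsf G$ of pairs $(e,\alpha)$, where the $e$'s are pairwise distinct 2-element subsets $\{u,v\}$ (written $uv$) of a vertex set and $\alpha$ is a color (different edges may have the same color). $\chi(\mathsf G)$ is the set of colors used; $\mathsf G$ is rainbow if $|\chi(\mathsf G)|=|\mathsf G|$. A cycle is a colored graph whose underlying uncolored edge set forms a cycle; it is even if its number of edges is even. A family of cycles on a vertex set $V$ is a list $(\mathsf D_1,\dots,\mathsf D_m)$ of cycles with vertices in $V$, where all edges of $\mathsf D_i$ receive one color $\alpha_i$ and $\alpha_1,\dots,\alpha_m$ are pairwise distinct (the underlying uncolored cycles may coincide). The family contains a rainbow even cycle if there is an even cycle $\mathsf G\subseteq\bigcup_i\mathsf D_i$ that is rainbow, i.e. formed by edges from pairwise distinct $\mathsf D_i$'s. *)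

(* Defs.v *)
From mathcomp Require Import all_boot.
Set Implicit Arguments.
Unset Strict Implicit.
Unset Printing Implicit Defensive.

(* Vertices: 'I_n.  An (uncolored) edge uv is the 2-element set [set u; v].
   An uncolored graph is a set of edges {set {set 'I_n}}. *)

(* (v0 is only a default value for nth; since size s >= 3 it is irrelevant.) *)
Definition is_cycle (n : nat) (E : {set {set 'I_n}}) : Prop :=
  exists (v0 : 'I_n) (s : seq 'I_n),
    [/\ 3 <= size s, uniq s &
        forall e : {set 'I_n},
          e \in E <->
          exists2 i, i < size s &
            e = [set nth (head v0 s) s i; nth (head v0 s) s ((i.+1) %% size s)] ].

Definition is_even_cycle (n : nat) (E : {set {set 'I_n}}) : Prop :=
  is_cycle E /\ ~~ odd #|E|.

(* A family of m cycles D_0, ..., D_{m-1} on 'I_n; D_i has color i, so the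
   colors are automatically pairwise distinct. *)
Definition has_rainbow_even_cycle (n m : nat) (D : 'I_m -> {set {set 'I_n}}) : Prop :=
  exists (E : {set {set 'I_n}}) (c : {set 'I_n} -> 'I_m),
    [/\ is_even_cycle E,
        (forall e, e \in E -> e \in D (c e)) &
        {in E &, injective c}].

(* Main.v *)
Require Import Defs.
From mathcomp Require Import all_boot.
From mathcomp Require Import zify.
Set Implicit Arguments. Unset Strict Implicit. Unset Printing Implicit Defensive.

Definition cycE n (s : seq 'I_n) : {set {set 'I_n}} :=
  match s with [::] => set0
  | x :: _ => [set [set nth x s i; nth x s (i.+1 %% size s)] | i : 'I_(size s)] end.

Lemma modS j n : j < n -> j.+1 %% n = if j.+1 == n then 0 else j.+1.
Proof. by move=> h; case: eqP => [->|ne]; rewrite ?modnn // modn_small //; lia. Qed.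

Lemma set2_inj (T : finType) (x y u v : T) : x != y -> [set x; y] = [set u; v] ->
  (x = u /\ y = v) \/ (x = v /\ y = u).
Proof.
move=> nxy E.
have: x \in [set u; v] by rewrite -E set21.
have: y \in [set u; v] by rewrite -E set22.
have: u \in [set x; y] by rewrite E set21.
have: v \in [set x; y] by rewrite E set22.
move=> _ _ /set2P hy /set2P hx.
by case: hx hy => hx [] hy; subst; rewrite ?eqxx in nxy; auto.
Qed.

Lemma nth_neq n (s : seq 'I_n) x0 i : uniq s -> 3 <= size s -> i < size s ->
  nth x0 s i != nth x0 s (i.+1 %% size s).
Proof.
move=> u h3 hi; rewrite nth_uniq //; last by rewrite ltn_mod; lia.
rewrite modS //; case: ifP => /eqP h; lia.
Qed.

Lemma edge_inj n (s : seq 'I_n) x0 i j : uniq s -> 3 <= size s -> i < size s -> j < size s ->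
  [set nth x0 s i; nth x0 s (i.+1 %% size s)] = [set nth x0 s j; nth x0 s (j.+1 %% size s)] ->
  i = j.
Proof.
move=> u h3 hi hj /(set2_inj (nth_neq x0 u h3 hi)).
have hi' : i.+1 %% size s < size s by rewrite ltn_mod; lia.
have hj' : j.+1 %% size s < size s by rewrite ltn_mod; lia.
case=> [[/eqP a _]|[/eqP a /eqP b]]; first by move: a; rewrite nth_uniq // => /eqP.
move: a b; rewrite !nth_uniq // !modS //.
do 2 case: ifP => /eqP ?; lia.
Qed.

Lemma card_cycE n (s : seq 'I_n) : uniq s -> 3 <= size s -> #|cycE s| = size s.
Proof.
case: s => [//|x t] u h3 /=.
rewrite card_imset ?card_ord // => i j /(edge_inj u h3 (ltn_ord i) (ltn_ord j)) /val_inj //.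
Qed.

Lemma cycE_cycle n (s : seq 'I_n) : uniq s -> 3 <= size s -> is_cycle (cycE s).
Proof.
case: s => [//|x t] u h3; exists x, (x :: t); split => // e; split.
  by case/imsetP => i _ ->; exists i.
by case=> i hi ->; apply/imsetP; exists (Ordinal hi).
Qed.

Lemma cycleE n (E : {set {set 'I_n}}) : is_cycle E ->
  exists x t, [/\ 3 <= size (x :: t), uniq (x :: t) & E = cycE (x :: t)].
Proof.
case=> v0 [[|x t] [h3 u H]] //; exists x, t; split => //.
apply/setP => e; apply/idP/imsetP => [/H [i hi ->]|[i _ ->]].
  by exists (Ordinal hi).
by apply/H; exists i.
Qed.

Lemma mem_cycE n (x : 'I_n) t i : i < size (x :: t) ->
  [set nth x (x :: t) i; nth x (x :: t) (i.+1 %% size (x :: t))] \in cycE (x :: t).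
Proof. by move=> hi; apply/imsetP; exists (Ordinal hi). Qed.

Definition good n m := exists D : 'I_m -> {set {set 'I_n}},
  (forall i, is_even_cycle (D i)) /\ ~ has_rainbow_even_cycle D.

Definition ordk k (i : nat) : 'I_k.+1 := Ordinal (ltn_pmod i (ltn0Sn k)).
Definition allv k : seq 'I_k :=
  match k as k0 return seq 'I_k0 with 0 => [::] | k'.+1 => map (ordk k') (iota 0 k'.+1) end.
Lemma allvP k (x : 'I_k) : x \in allv k.
Proof.
case: k x => [[] //|k x]; apply/mapP; exists (val x); first by rewrite mem_iota /=.
by apply: val_inj; rewrite /= modn_small.
Qed.

Section Check.
Variable k : nat.
Variable cs : seq (seq 'I_k).
Definition memE (x y : 'I_k) (c : seq 'I_k) := match c with [::] => false | z :: _ =>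
  has (fun j => ((x == nth z c j) && (y == nth z c (j.+1 %% size c))) ||
                ((y == nth z c j) && (x == nth z c (j.+1 %% size c)))) (iota 0 (size c)) end.
Definition adjb x y := has (memE x y) cs.
Fixpoint ext (l : nat) : seq (seq 'I_k) :=
  match l with 0 => [:: [::]]
  | l'.+1 => flatten [seq [seq x :: s | x <- allv k & (x \notin s) &&
                 (if s is y :: _ then adjb x y else true)] | s <- ext l'] end.
Definition viol (s : seq 'I_k) := match s with [::] => false | z :: _ =>
  let n := size s in
  has (fun c => let T := [seq j <- iota 0 n | memE (nth z s j) (nth z s (j.+1 %% n)) c &&
          all (fun c' => memE (nth z s j) (nth z s (j.+1 %% n)) c' ==> (c' == c)) cs] in
     let J := [seq i <- iota 0 (size cs) |
          has (fun j => memE (nth z s j) (nth z s (j.+1 %% n)) (nth [::] cs i)) T] in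
     size J < size T) cs end.
Definition cond s := match s with [::] => true | z :: _ =>
   adjb (last z s) z ==> odd (size s) || viol s end.
Definition check := all (fun l => all cond (ext l)) (iota 3 (k-2)).

Lemma memE_spec x y c : x != y -> [set x; y] \in cycE c -> memE x y c.
Proof.
case: c => [|z t] hxy; first by rewrite inE.
move=> /imsetP [i _ /(set2_inj hxy) H].
apply/hasP; exists (val i); first by rewrite mem_iota /=.
by case: H => [[-> ->]|[-> ->]]; rewrite !eqxx ?orbT.
Qed.

Lemma ext_complete s : uniq s -> sorted adjb s -> s \in ext (size s).
Proof.
elim: s => [|x t IH] //= /andP [xt ut] st.
apply/flattenP; exists [seq x0 :: t | x0 <- allv k & (x0 \notin t) &&
                 (if t is y :: _ then adjb x0 y else true)].
  by apply: map_f; apply: IH => //; apply: path_sorted st.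
apply: map_f; rewrite mem_filter allvP andbT xt /=.
by case: t st {IH xt ut} => // y t /= /andP [].
Qed.

End Check.

Lemma base_good k (cs : seq (seq 'I_k)) :
  all (fun c => uniq c && (3 <= size c) && ~~ odd (size c)) cs -> check cs -> good k (size cs).
Proof.
move=> hall hchk.
exists (fun i => cycE (nth [::] cs i)); split.
  move=> i; have := all_nthP [::] hall i (ltn_ord i) => /andP [/andP [u h3] ev].
  by split; [apply: cycE_cycle | rewrite card_cycE].
case=> E [c [[Ecyc Eev] Hc Hinj]].
have [x [t [h3 u EE]]] := cycleE Ecyc; subst E.
set s := x :: t in h3 u Hc Hinj Eev *.
have hadj : forall i, i < size s -> adjb cs (nth x s i) (nth x s (i.+1 %% size s)).
  move=> i hi; have := Hc _ (mem_cycE hi) => /(memE_spec (nth_neq x u h3 hi)) hm.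
  by apply/hasP; exists (nth [::] cs (c [set nth x s i; nth x s (i.+1 %% size s)])) => //;
     apply: mem_nth.
have hsort : sorted (adjb cs) s.
  apply/(sortedP x) => i hi; have := hadj i (ltnW hi); rewrite modS; last lia.
  by rewrite ifF //; apply/eqP; lia.
have hlast : adjb cs (last x s) x.
  have := hadj (size s).-1 ltac:(rewrite /s /=; lia).
  by rewrite nth_last prednK ?modnn.
have hks : size s <= k.
  have := @uniq_leq_size _ s (enum 'I_k) u; rewrite size_enum_ord; apply.
  by move=> y _; rewrite mem_enum.
have hc : cond cs s.
  move/allP: hchk => /(_ (size s)); rewrite mem_iota => /(_ ltac:(lia)) /allP; apply.
  exact: ext_complete.
have hc' : adjb cs (last x s) x ==> odd (size s) || viol cs s := hc.
have ev : odd (size s) = false by apply/negbTE; rewrite -card_cycE.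
rewrite hlast ev implyTb orFb in hc'.
case/hasP: hc' => c0 _.
move=> hJT; cbv zeta in hJT.
set T := filter _ (iota 0 (size s)) in hJT.
set J := filter _ (iota 0 (size cs)) in hJT.
pose ed j := [set nth x s j; nth x s (j.+1 %% size s)].
have hT : forall j, j \in T -> j < size s.
  by move=> j; rewrite mem_filter mem_iota add0n => /andP [_ /andP [_]].
pose ts := map ed T.
have uts : uniq ts.
  rewrite map_inj_in_uniq ?filter_uniq ?iota_uniq // => i j hi hj.
  exact: (edge_inj u h3 (hT _ hi) (hT _ hj)).
have sts : {subset ts <= cycE s} by move=> _ /mapP [j /hT hj ->]; exact: mem_cycE.
pose js := [seq i <- enum 'I_(size cs) | val i \in J].
have h1 : size ts <= size js.
  rewrite -(size_map c); apply: uniq_leq_size.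
    rewrite map_inj_in_uniq // => a b ha hb; apply: Hinj; exact: sts.
  move=> _ /mapP [_ /mapP [j hj ->] ->].
  rewrite mem_filter mem_enum andbT mem_filter; apply/andP; split; last first.
    by rewrite mem_iota add0n leq0n ltn_ord.
  apply/hasP; exists j; first exact: hj.
  have hj' := hT _ hj.
  exact: (memE_spec (nth_neq x u h3 hj') (Hc _ (mem_cycE hj'))).
have h2 : size js <= size J.
  rewrite -(size_map val); apply: uniq_leq_size.
    by rewrite (map_inj_uniq val_inj) filter_uniq // enum_uniq.
  move=> y /mapP [i]; rewrite mem_filter => /andP [hi _] ->; exact: hi.
by move: hJT; rewrite size_map in h1; lia.
Qed.

Definition sq k (l : seq nat) : seq 'I_k.+1 := [seq ordk k x | x <- l].
Definition cs4 : seq (seq 'I_4) := [seq sq 3 x | x <- [:: [::0;1;2;3];[::0;1;2;3];[::0;1;2;3]]].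
Definition cs5 : seq (seq 'I_5) := [seq sq 4 x | x <- [:: [::0;1;3;2];[::0;1;3;2];[::0;1;4;3];[::0;1;4;3]]].
Definition cs6 : seq (seq 'I_6) := [seq sq 5 x | x <- [:: [::0;1;3;2];[::0;1;3;2];[::0;1;3;2];[::0;3;5;4];[::0;3;5;4];[::0;3;5;4]]].
Definition cs7 : seq (seq 'I_7) := [seq sq 6 x | x <- [:: [::0;1;3;2];[::0;1;3;2];[::0;1;3;2];[::0;3;5;4];[::1;4;6;5];[::1;4;6;5];[::1;4;6;5]]].
Definition cs8 : seq (seq 'I_8) := [seq sq 7 x | x <- [:: [::0;1;3;2];[::0;1;3;2];[::0;1;3;2];[::0;3;4;5;6;7];[::0;3;4;5;6;7];[::0;3;4;5;6;7];[::0;3;4;5;6;7];[::0;3;4;5;6;7]]].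

Lemma good4 : good 4 3.
Proof. have e : size cs4 = 3 by []. rewrite -e. apply: base_good; vm_compute; reflexivity. Qed.
Lemma good5 : good 5 4.
Proof. have e : size cs5 = 4 by []. rewrite -e. apply: base_good; vm_compute; reflexivity. Qed.
Lemma good6 : good 6 6.
Proof. have e : size cs6 = 6 by []. rewrite -e. apply: base_good; vm_compute; reflexivity. Qed.
Lemma good7 : good 7 7.
Proof. have e : size cs7 = 7 by []. rewrite -e. apply: base_good; vm_compute; reflexivity. Qed.
Lemma good8 : good 8 8.
Proof. have e : size cs8 = 8 by []. rewrite -e. apply: base_good; vm_compute; reflexivity. Qed.

Lemma cycEP n (x : 'I_n) t e : reflect (exists2 i, i < size (x :: t) &
   e = [set nth x (x :: t) i; nth x (x :: t) (i.+1 %% size (x :: t))]) (e \in cycE (x :: t)).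
Proof.
apply: (iffP idP).
  by case/imsetP => i _ ->; exists i.
by case=> i hi ->; apply: mem_cycE.
Qed.

Definition mapE a N (f : 'I_a -> 'I_N) (E : {set {set 'I_a}}) : {set {set 'I_N}} :=
  (fun e : {set 'I_a} => f @: e) @: E.

Lemma imset_pair (T U : finType) (f : T -> U) u v : f @: [set u; v] = [set f u; f v].
Proof. by rewrite imsetU1 imset_set1. Qed.

Lemma mapE_cycE a N (f : 'I_a -> 'I_N) s : mapE f (cycE s) = cycE (map f s).
Proof.
case: s => [|x t]; first by rewrite /mapE /= imset0.
have -> : map f (x :: t) = f x :: map f t by [].
apply/setP => e; apply/imsetP/cycEP.
  case=> _ /cycEP [i hi ->] ->; exists i; first by rewrite /= size_map.
  rewrite imset_pair -!(nth_map x (f x) f) ?ltn_mod //=; try lia.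
  by rewrite size_map.
case=> i; rewrite /= size_map => hi ->; exists [set nth x (x :: t) i; nth x (x :: t) (i.+1 %% size (x :: t))].
  exact: mem_cycE.
by rewrite imset_pair -!(nth_map x (f x) f) ?ltn_mod //=; try lia.
Qed.

Lemma mapE_even a N (f : 'I_a -> 'I_N) E : injective f -> is_even_cycle E -> is_even_cycle (mapE f E).
Proof.
move=> finj [/cycleE [x [t [h3 u ->]]] ev]; split.
  by rewrite mapE_cycE; apply: cycE_cycle; rewrite ?map_inj_uniq ?size_map.
by rewrite /mapE card_imset //; apply: imset_inj.
Qed.

Lemma cyc_edge2 n (E : {set {set 'I_n}}) e : is_cycle E -> e \in E ->
  exists u v, u != v /\ e = [set u; v].
Proof.
case/cycleE => x [t [h3 u ->]] /cycEP [i hi ->].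
by exists (nth x (x :: t) i), (nth x (x :: t) (i.+1 %% size (x :: t))); split => //; apply: nth_neq.
Qed.

Lemma pull a N (f : 'I_a -> 'I_N) (s : seq 'I_N) : (forall y, y \in s -> y \in codom f) ->
  exists s1, s = map f s1.
Proof.
elim: s => [|y s IH] H; first by exists [::].
have [s1 ->] : exists s1, s = map f s1 by apply: IH => z hz; apply: H; rewrite inE hz orbT.
have /codomP [y1 ->] := H y (mem_head _ _).
by exists (y1 :: s1).
Qed.

Lemma transfer a N p M (f : 'I_a -> 'I_N) (g : 'I_p -> 'I_M)
  (D : 'I_p -> {set {set 'I_a}}) (D' : 'I_M -> {set {set 'I_N}}) :
  injective f -> injective g ->
  (forall j u v, u != v -> f @: [set u; v] \in D' j -> exists2 i, j = g i & [set u; v] \in D i) ->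
  forall E (c : {set 'I_N} -> 'I_M), is_even_cycle E -> (forall e, e \in E -> e \in D' (c e)) ->
  {in E &, injective c} -> (forall e, e \in E -> {subset e <= codom f}) ->
  has_rainbow_even_cycle D.
Proof.
move=> finj ginj Hyp E c [Ecyc Eev] Hc Hinj Hsub.
have [x [t [h3 u EE]]] := cycleE Ecyc.
have [s1 es] : exists s1, x :: t = map f s1.
  apply: pull => y /(nthP x) [i hi <-].
  have he : [set nth x (x :: t) i; nth x (x :: t) (i.+1 %% size (x :: t))] \in E.
    by rewrite EE; exact: mem_cycE.
  apply: (Hsub _ he); exact: set21.
have E1E : E = mapE f (cycE s1) by rewrite EE es mapE_cycE.
have u1 : uniq s1 by rewrite -(map_inj_uniq finj) -es.
have h31 : 3 <= size s1 by rewrite -(size_map f) -es.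
have E1cyc := cycE_cycle u1 h31.
have hcol : forall e1, e1 \in cycE s1 -> exists2 i, c (f @: e1) = g i & e1 \in D i.
  move=> e1 he1; have [u' [v' [nuv eq1]]] := cyc_edge2 E1cyc he1; subst e1.
  apply: Hyp nuv _; apply: Hc; rewrite E1E; exact: imset_f.
case: p g ginj D Hyp hcol => [|p] g ginj D Hyp hcol.
  case: s1 {es E1E u1} h31 E1cyc hcol => [//|y s1] h31 E1cyc hcol.
  by have [[]] := hcol _ (mem_cycE (ltn0Sn _)).
pose c1 (e1 : {set 'I_a}) := odflt ord0 [pick i | g i == c (f @: e1)].
have hc1 : forall e1, e1 \in cycE s1 -> c (f @: e1) = g (c1 e1) /\ e1 \in D (c1 e1).
  move=> e1 he1; have [i hi hD] := hcol e1 he1; rewrite /c1.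
  case: pickP => [i' /eqP hi'|/(_ i)]; last by rewrite hi eqxx.
  by rewrite hi'; move: hi; rewrite -hi' => /ginj ->.
exists (cycE s1), c1; split.
- split => //; move: Eev; rewrite E1E /mapE card_imset //; exact: imset_inj.
- by move=> e1 /hc1 [].
move=> e1 e2 h1 h2 eq12.
have [hA _] := hc1 _ h1; have [hB _] := hc1 _ h2.
have : f @: e1 = f @: e2.
  apply: Hinj; rewrite ?E1E ?imset_f //.
  by rewrite hA hB eq12.
exact: imset_inj.
Qed.

Lemma cycle_cycE n (x : 'I_n) t : cycle (fun u v => [set u; v] \in cycE (x :: t)) (x :: t).
Proof.
rewrite /cycle; apply/(pathP x) => i; rewrite size_rcons => hi.
have -> : x :: rcons t x = rcons (x :: t) x by [].
rewrite nth_rcons /= hi nth_rcons.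
have := @mem_cycE n x t i hi; rewrite modS //=.
case: ltnP => h.
  by rewrite ifF //; apply/eqP; lia.
have ei : i = size t by lia.
by rewrite ei !eqxx.
Qed.

Lemma sorted_same N (R : rel 'I_N) (P : pred 'I_N) z :
  (forall x y, x != z -> y != z -> R x y -> P x = P y) ->
  forall p, sorted R p -> z \notin p -> forall y, y \in p -> P y = P (head z p).
Proof.
move=> hR; elim=> [//|x p IH] /= sp; rewrite inE negb_or => /andP [zx zp] y.
rewrite inE => /orP [/eqP -> //|yp].
rewrite (IH (path_sorted sp) zp y yp).
case: p sp IH zp yp => [//|x' p] /= /andP [rx _] _ zp _.
rewrite inE negb_or in zp; case/andP: zp => zx' _.
by symmetry; apply: hR; rewrite // eq_sym.
Qed.

Lemma cycle_side N (E : {set {set 'I_N}}) (z : 'I_N) (P Q : pred 'I_N) :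
  is_cycle E -> (forall v, P v || Q v) -> (forall v, P v -> Q v -> v = z) -> P z -> Q z ->
  (forall e, e \in E -> {subset e <= P} \/ {subset e <= Q}) ->
  (forall e, e \in E -> {subset e <= P}) \/ (forall e, e \in E -> {subset e <= Q}).
Proof.
move=> Ecyc hPQ hPQz Pz Qz hE.
have [x [t [h3 u EE]]] := cycleE Ecyc; subst E.
set s := x :: t in u h3 hE *.
pose R := fun u v => [set u; v] \in cycE s.
have hR : forall x y, x != z -> y != z -> R x y -> P x = P y.
  move=> a b az bz /hE [] H.
    have Pa : P a := H a (set21 _ _); have Pb : P b := H b (set22 _ _).
    by rewrite Pa Pb.
  have Qa : Q a := H a (set21 _ _); have Qb : Q b := H b (set22 _ _).
  by apply/idP/idP => [/hPQz /(_ Qa) /eqP | /hPQz /(_ Qb) /eqP]; rewrite ?(negbTE az) ?(negbTE bz).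
have hc : cycle R s := cycle_cycE x t.
have [b hb] : exists b, forall y, y \in s -> y != z -> P y = b.
  case: (boolP (z \in s)) => zs.
    case: (rot_to zs) => i p hrot.
    have hc' : cycle R (z :: p) by rewrite -hrot rot_cycle.
    have up : uniq (z :: p) by rewrite -hrot rot_uniq.
    move: hc'; rewrite /= rcons_path => /andP [/path_sorted sp _].
    case/andP: up => zp _.
    exists (P (head z p)) => y ys yz.
    apply: (sorted_same hR sp zp).
    have : y \in rot i s by rewrite mem_rot.
    by rewrite hrot inE (negbTE yz).
  move: hc; rewrite /= rcons_path => /andP [sp _].
  exists (P (head z s)) => y ys yz.
  exact: (@sorted_same N R P z hR s sp zs).
have hedge : forall e, e \in cycE s -> {subset e <= s}.
  move=> e /cycEP [i hi ->] w /set2P [] ->; apply: mem_nth => //.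
  by rewrite ltn_mod; lia.
case: b hb => hb; [left|right] => e he w /(hedge _ he) ws.
  by case: (eqVneq w z) => [->//|wz]; exact: (hb w ws wz).
case: (eqVneq w z) => [->//|wz].
by have := hPQ w; rewrite (hb w ws wz).
Qed.

Lemma f1_proof a b : a.+1 <= (a + b).+1.
Proof. lia. Qed.
Definition f1 a b (x : 'I_a.+1) : 'I_(a + b).+1 := widen_ord (f1_proof a b) x.
Definition f2 a b (y : 'I_b.+1) : 'I_(a + b).+1 := if val y == 0 then ord0 else inord (a + y).
Arguments f1 : clear implicits.
Arguments f2 : clear implicits.

Lemma f1v a b x : nat_of_ord (f1 a b x) = nat_of_ord x. Proof. by []. Qed.
Lemma f2v a b y : nat_of_ord (f2 a b y) = if nat_of_ord y == 0 then 0 else a + y.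
Proof.
rewrite /f2; case: eqP => // _; apply: (@inordK (a + b)); have := ltn_ord y; lia.
Qed.
Lemma f1_inj a b : injective (f1 a b).
Proof. by move=> x y /(congr1 (@nat_of_ord _)); rewrite !f1v => /val_inj. Qed.
Lemma f2_inj a b : injective (f2 a b).
Proof.
move=> x y /(congr1 (@nat_of_ord _)); rewrite !f2v => h; apply: val_inj => /=.
by move: h; do 2 case: eqP => ?; simpl in *; lia.
Qed.

Lemma mism (T T' U : finType) (F : T -> U) (G : T' -> U) u v u' v' :
  u' != v' -> F @: [set u; v] = G @: [set u'; v'] ->
  (forall w1 w2 x1 x2, G w1 = F x1 -> G w2 = F x2 -> w1 = w2) -> False.
Proof.
move=> nuv eq H.
have : G u' \in F @: [set u; v] by rewrite eq imset_f // set21.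
have : G v' \in F @: [set u; v] by rewrite eq imset_f // set22.
case/imsetP => x2 _ h2; case/imsetP => x1 _ h1.
by move: nuv; rewrite (H _ _ _ _ h1 h2) eqxx.
Qed.

Definition Dglue a b p q (D1 : 'I_p -> {set {set 'I_a.+1}}) (D2 : 'I_q -> {set {set 'I_b.+1}})
  (i : 'I_(p + q)) : {set {set 'I_(a + b).+1}} :=
  match split i with inl i1 => mapE (f1 a b) (D1 i1) | inr i2 => mapE (f2 a b) (D2 i2) end.

Lemma glue a b p q : good a.+1 p -> good b.+1 q -> good (a + b).+1 (p + q).
Proof.
case=> D1 [ev1 nr1] [D2 [ev2 nr2]].
exists (Dglue D1 D2); split.
  move=> i; rewrite /Dglue; case: (split i) => j; apply: mapE_even => //.
    exact: f1_inj.
  exact: f2_inj.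
case=> E [c [Eev Hc Hinj]].
have hside : forall e, e \in E -> {subset e <= [pred v : 'I_(a + b).+1 | v <= a]} \/
                            {subset e <= [pred v : 'I_(a + b).+1 | (nat_of_ord v == 0) || (a < v)]}.
  move=> e he; move: (Hc e he); rewrite /Dglue; case: (split (c e)) => j /imsetP [e' _ ->];
    [left|right] => w /imsetP [x _ ->]; rewrite inE ?f1v ?f2v.
    by have := ltn_ord x; lia.
  by case: ifP => [//|/eqP nx]; apply/orP; right; lia.
case: (cycle_side (z := ord0) Eev.1 _ _ _ _ hside).
- by move=> v; rewrite !inE; lia.
- by move=> v; rewrite !inE => h1 /orP [/eqP h2|h2]; apply: val_inj => //=; lia.
- by rewrite inE.
- by rewrite inE eqxx.
- move=> hall; apply: nr1.
  apply: (@transfer _ _ _ _ (f1 a b) (@lshift p q) D1 (Dglue D1 D2) (@f1_inj a b) (@lshift_inj p q) _ E c Eev Hc Hinj).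
    move=> j u v nuv; rewrite -(splitK j) /Dglue unsplitK.
    case: (split j) => [i1|i2] /imsetP [e' he' eq].
      by exists i1 => //; rewrite (imset_inj (@f1_inj a b) eq).
    have [u' [v' [nuv' ee]]] := cyc_edge2 (ev2 i2).1 he'; subst e'.
    case: (mism nuv' eq) => w1 w2 x1 x2 /(congr1 (@nat_of_ord _)) h1 /(congr1 (@nat_of_ord _)) h2.
    move: h1 h2; rewrite !f2v !f1v => h1 h2; apply: val_inj => /=.
    have := ltn_ord x1; have := ltn_ord x2; move: h1 h2; do 2 case: eqP => ?; lia.
  move=> e he w /(hall e he); rewrite inE => hw; apply/codomP; exists (inord w).
  by apply: val_inj => /=; rewrite inordK // ltnS.
- move=> hall; apply: nr2.
  apply: (@transfer _ _ _ _ (f2 a b) (@rshift p q) D2 (Dglue D1 D2) (@f2_inj a b) (@rshift_inj p q) _ E c Eev Hc Hinj).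
    move=> j u v nuv; rewrite -(splitK j) /Dglue unsplitK.
    case: (split j) => [i1|i2] /imsetP [e' he' eq]; last first.
      by exists i2 => //; rewrite (imset_inj (@f2_inj a b) eq).
    have [u' [v' [nuv' ee]]] := cyc_edge2 (ev1 i1).1 he'; subst e'.
    case: (mism nuv' eq) => w1 w2 x1 x2 /(congr1 (@nat_of_ord _)) h1 /(congr1 (@nat_of_ord _)) h2.
    move: h1 h2; rewrite !f2v !f1v => h1 h2; apply: val_inj => /=.
    have := ltn_ord w1; have := ltn_ord w2; move: h1 h2; do 2 case: eqP => ?; lia.
  move=> e he w /(hall e he); rewrite inE => /orP [/eqP hw|hw]; apply/codomP.
    by exists ord0; apply: ord_inj; rewrite f2v /= hw.
  exists (inord (w - a)); apply: ord_inj; rewrite f2v inordK; last by have := ltn_ord w; lia.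
  by case: eqP => ?; lia.
Qed.

Lemma good_cast n m n' m' : good n m -> n = n' -> m = m' -> good n' m'.
Proof. by move=> g <- <-. Qed.

Lemma good_all n : 4 <= n -> good n ((6 * (n - 1)) %/ 5).
Proof.
elim: n {-2}n (leqnn n) => [|N IH] n hn h4; first lia.
case: (leqP n 8) => h8.
  case: n hn h4 h8 => [|[|[|[|[|[|[|[|[|n]]]]]]]]] hn h4 h8 //.
  - exact: good4.
  - exact: good5.
  - exact: good6.
  - exact: good7.
  - exact: good8.
have g1 : good (n - 6).+1 ((6 * (n - 5 - 1)) %/ 5).
  by apply: good_cast (IH (n - 5) _ _) _ _; lia.
have g2 := glue g1 good6.
by apply: good_cast g2 _ _; lia.
Qed.

Theorem mainTheorem2 (n : nat) (hn : 4 <= n) :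
  exists D : 'I_((6 * (n - 1)) %/ 5) -> {set {set 'I_n}},
    (forall i, is_even_cycle (D i)) /\ ~ has_rainbow_even_cycle D.
Proof. exact: good_all. Qed.
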